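(* Let ${\mathbf{X}}\in\mathbb{R}_+^{m\times n}$, let ${\mathbf{A}}\in\mathbb{R}^{k\times m}$ be arbitrary, let $\lambda\in[0,1]$ and $\sigma\ge\max_{a,b}\big(({\mathbf{A}}^T{\mathbf{A}})_{ab}\big)_-$. Then for entrywise nonnegative ${\mathbf{U}}\in\mathbb{R}^{m\times r}$, ${\mathbf{V}}\in\mathbb{R}^{n\times r}$ (with denominators below entrywise positive), the objective $$\|{\mathbf{A}}({\mathbf{X}}-{\mathbf{U}}{\mathbf{V}}^T)\|_F^2+\lambda\|{\mathbf{U}}{\mathbf{V}}^T\|_F^2+\sigma\|\mathbf{1}^T({\mathbf{X}}-{\mathbf{U}}{\mathbf{V}}^T)\|_2^2$$ does not increase under each of the updates $${\mathbf{U}}\leftarrow{\mathbf{U}}\circ\frac{{\mathbf{A}}^T{\mathbf{A}}{\mathbf{X}}{\mathbf{V}}+\sigma\mathbf{1}\mathbf{1}^T{\mathbf{X}}{\mathbf{V}}}{{\mathbf{A}}^T{\mathbf{A}}{\mathbf{U}}{\mathbf{V}}^T{\mathbf{V}}+\sigma\mathbf{1}\mathbf{1}^T{\mathbf{U}}{\mathbf{V}}^T{\mathbf{V}}+\lambda{\mathbf{U}}{\mathbf{V}}^T{\mathbf{V}}},\qquad {\mathbf{V}}\leftarrow{\mathbf{V}}\circ\frac{{\mathbf{X}}^T{\mathbf{A}}^T{\mathbf{A}}{\mathbf{U}}+\sigma{\mathbf{X}}^T\mathbf{1}\mathbf{1}^T{\mathbf{U}}}{{\mathbf{V}}{\mathbf{U}}^T{\mathbf{A}}^T{\mathbf{A}}{\mathbf{U}}+\sigma{\mathbf{V}}{\mathbf{U}}^T\mathbf{1}\mathbf{1}^T{\mathbf{U}}+\lambda{\mathbf{V}}{\mathbf{U}}^T{\mathbf{U}}},$$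 and the updated factors remain entrywise nonnegative.
   Context: $\mathbf{1}\in\mathbb{R}^m$ is the all-ones vector; $(x)_-=-\min(x,0)$; $\circ$ is entrywise product and the fraction bar is entrywise division; $\mathbb{R}_+^{m\times n}$ denotes entrywise nonnegative matrices. $\|\cdot\|_F$ is the Frobenius norm, $\|\cdot\|_2$ the Euclidean norm. *)

(* Defs.v *)
From mathcomp Require Import all_boot all_order all_algebra.
Set Implicit Arguments. Unset Strict Implicit. Unset Printing Implicit Defensive.
Import Order.TTheory GRing.Theory Num.Theory.
Local Open Scope ring_scope.

Definition negpart {R : realDomainType} (x : R) : R := - Num.min x 0.

Definition frob2 {R : pzRingType} {p q : nat} (M : 'M[R]_(p, q)) : R :=
  \sum_(i < p) \sum_(j < q) M i j ^+ 2.

Definition mx_nonneg {R : numDomainType} {p q : nat} (M : 'M[R]_(p, q)) : Prop :=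
  forall i j, 0 <= M i j.
Definition mx_pos {R : numDomainType} {p q : nat} (M : 'M[R]_(p, q)) : Prop :=
  forall i j, 0 < M i j.

Definition ones {R : pzRingType} (p : nat) : 'cV[R]_p := const_mx 1.

Definition hadamard {R : pzRingType} {p q : nat} (M N : 'M[R]_(p, q)) : 'M[R]_(p, q) :=
  \matrix_(i, j) (M i j * N i j).
Definition ediv {R : fieldType} {p q : nat} (M N : 'M[R]_(p, q)) : 'M[R]_(p, q) :=
  \matrix_(i, j) (M i j / N i j).


Definition objective {R : realFieldType} {k m n r : nat}
  (A : 'M[R]_(k, m)) (X : 'M[R]_(m, n)) (lam sigma : R)
  (U : 'M[R]_(m, r)) (V : 'M[R]_(n, r)) : R :=
  frob2 (A *m (X - U *m V^T)) + lam * frob2 (U *m V^T)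
  + sigma * frob2 ((ones m)^T *m (X - U *m V^T)).

Definition numU {R : realFieldType} {k m n r : nat}
  (A : 'M[R]_(k, m)) (X : 'M[R]_(m, n)) (lam sigma : R)
  (U : 'M[R]_(m, r)) (V : 'M[R]_(n, r)) : 'M[R]_(m, r) :=
  A^T *m A *m X *m V + sigma *: (ones m *m (ones m)^T *m X *m V).
Definition denU {R : realFieldType} {k m n r : nat}
  (A : 'M[R]_(k, m)) (X : 'M[R]_(m, n)) (lam sigma : R)
  (U : 'M[R]_(m, r)) (V : 'M[R]_(n, r)) : 'M[R]_(m, r) :=
  A^T *m A *m U *m V^T *m V + sigma *: (ones m *m (ones m)^T *m U *m V^T *m V)
  + lam *: (U *m V^T *m V).
Definition updU {R : realFieldType} {k m n r : nat}
  (A : 'M[R]_(k, m)) (X : 'M[R]_(m, n)) (lam sigma : R)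
  (U : 'M[R]_(m, r)) (V : 'M[R]_(n, r)) : 'M[R]_(m, r) :=
  hadamard U (ediv (numU A X lam sigma U V) (denU A X lam sigma U V)).

Definition numV {R : realFieldType} {k m n r : nat}
  (A : 'M[R]_(k, m)) (X : 'M[R]_(m, n)) (lam sigma : R)
  (U : 'M[R]_(m, r)) (V : 'M[R]_(n, r)) : 'M[R]_(n, r) :=
  X^T *m A^T *m A *m U + sigma *: (X^T *m ones m *m (ones m)^T *m U).
Definition denV {R : realFieldType} {k m n r : nat}
  (A : 'M[R]_(k, m)) (X : 'M[R]_(m, n)) (lam sigma : R)
  (U : 'M[R]_(m, r)) (V : 'M[R]_(n, r)) : 'M[R]_(n, r) :=
  V *m U^T *m A^T *m A *m U + sigma *: (V *m U^T *m ones m *m (ones m)^T *m U)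
  + lam *: (V *m U^T *m U).
Definition updV {R : realFieldType} {k m n r : nat}
  (A : 'M[R]_(k, m)) (X : 'M[R]_(m, n)) (lam sigma : R)
  (U : 'M[R]_(m, r)) (V : 'M[R]_(n, r)) : 'M[R]_(n, r) :=
  hadamard V (ediv (numV A X lam sigma U V) (denV A X lam sigma U V)).

(* Main.v *)
Require Import Defs.
From mathcomp Require Import all_boot all_order all_algebra.
From mathcomp Require Import ring lra.
Import Order.TTheory GRing.Theory Num.Theory.
Local Open Scope ring_scope.

Section S.
Context {R : realFieldType}.

Definition ip {p q : nat} (Y Z : 'M[R]_(p, q)) : R := \tr (Y^T *m Z).

Lemma ipE p q (Y Z : 'M[R]_(p, q)) : ip Y Z = \sum_a \sum_i Y a i * Z a i.
Proof.
rewrite /ip /mxtrace exchange_big /=; apply: eq_bigr => i _.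
by rewrite mxE; apply: eq_bigr => a _; rewrite mxE.
Qed.

Lemma ipC p q (Y Z : 'M[R]_(p, q)) : ip Y Z = ip Z Y.
Proof. by rewrite /ip -mxtrace_tr trmx_mul trmxK. Qed.

Lemma ip_mull p p' q (M : 'M[R]_(p', p)) (Y : 'M[R]_(p, q)) Z :
  ip (M *m Y) Z = ip Y (M^T *m Z).
Proof. by rewrite /ip trmx_mul mulmxA. Qed.

Lemma ip_mulr p q q' (N : 'M[R]_(q, q')) (Y : 'M[R]_(p, q)) Z :
  ip (Y *m N) Z = ip Y (Z *m N^T).
Proof. by rewrite /ip trmx_mul -mulmxA mxtrace_mulC mulmxA. Qed.

Lemma ip_trl p q (Y : 'M[R]_(q, p)) (Z : 'M[R]_(p, q)) :
  ip Y^T Z = ip Y Z^T.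
Proof. by rewrite /ip trmxK -mxtrace_tr trmx_mul mxtrace_mulC. Qed.

Lemma ipDr p q (Y Z1 Z2 : 'M[R]_(p, q)) : ip Y (Z1 + Z2) = ip Y Z1 + ip Y Z2.
Proof. by rewrite /ip mulmxDr mxtraceD. Qed.

Lemma ipZr p q (Y Z : 'M[R]_(p, q)) a : ip Y (a *: Z) = a * ip Y Z.
Proof. by rewrite /ip -scalemxAr mxtraceZ. Qed.

Lemma ipDl p q (Y1 Y2 Z : 'M[R]_(p, q)) : ip (Y1 + Y2) Z = ip Y1 Z + ip Y2 Z.
Proof. by rewrite ipC ipDr; congr (_ + _); apply: ipC. Qed.

Lemma ipNl p q (Y Z : 'M[R]_(p, q)) : ip (- Y) Z = - ip Y Z.
Proof. by rewrite ipC -scaleN1r ipZr ipC mulN1r. Qed.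

Lemma ipNr p q (Y Z : 'M[R]_(p, q)) : ip Y (- Z) = - ip Y Z.
Proof. by rewrite ipC ipNl ipC. Qed.

Lemma frob2E p q (M : 'M[R]_(p, q)) : frob2 M = ip M M.
Proof. by rewrite ipE /frob2; apply: eq_bigr => a _; apply: eq_bigr => i _; rewrite expr2. Qed.


Lemma quad2 (T : finType) (F : T -> T -> R) (t : T -> R) :
  (forall x y, 0 <= F x y) -> (forall x y, F x y = F y x) ->
  \sum_x \sum_y F x y * (t x * t y) <= \sum_x \sum_y F x y * t x ^+ 2.
Proof.
move=> F0 Fs.
have E : \sum_x \sum_y F x y * t y ^+ 2 = \sum_x \sum_y F x y * t x ^+ 2.
  rewrite exchange_big /=; apply: eq_bigr => x _; apply: eq_bigr => y _.
  by rewrite Fs.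
have H : \sum_x \sum_y F x y * (t x * t y) *+ 2 <=
   \sum_x \sum_y (F x y * t x ^+ 2 + F x y * t y ^+ 2).
  apply: ler_sum => x _; apply: ler_sum => y _.
  have := F0 x y; have := sqr_ge0 (t x - t y); nra.
have H2 : \sum_x \sum_y (F x y * t x ^+ 2 + F x y * t y ^+ 2) =
   (\sum_x \sum_y F x y * t x ^+ 2) *+ 2.
  rewrite mulr2n -[X in _ + X]E -big_split /=.
  by apply: eq_bigr => x _; rewrite big_split.
rewrite H2 in H.
rewrite -(ler_pMn2r (n:=2)) //.
apply: le_trans H; rewrite -!sumrMnl; apply: ler_sum => x _; rewrite -sumrMnl.
by apply: ler_sum => y _.
Qed.

Lemma mxLYP p q (L : 'M[R]_p) (Y : 'M[R]_(p, q)) (P : 'M[R]_q) a i :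
  (L *m Y *m P) a i = \sum_b \sum_j L a b * Y b j * P j i.
Proof.
rewrite mxE exchange_big /=; apply: eq_bigr => j _.
by rewrite mxE mulr_suml.
Qed.

Lemma sum4 (I J : finType) (G : I -> J -> I -> J -> R) :
  \sum_a \sum_i \sum_b \sum_j G a i b j =
  \sum_(x : I * J) \sum_(y : I * J) G x.1 x.2 y.1 y.2.
Proof.
rewrite pair_bigA /=; apply: eq_bigr => x _.
by rewrite pair_bigA.
Qed.

Definition Gf {p q} (L : 'M[R]_p) (P : 'M[R]_q) (B Y : 'M[R]_(p, q)) :=
  ip Y (L *m Y *m P) - 2 * ip Y B.

Lemma mu_step p q (L : 'M[R]_p) (P : 'M[R]_q) (B U : 'M[R]_(p, q)) :
  L^T = L -> P^T = P -> mx_nonneg L -> mx_nonneg P -> mx_nonneg U ->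
  mx_pos (L *m U *m P) ->
  Gf L P B (hadamard U (ediv B (L *m U *m P))) <= Gf L P B U.
Proof.
move=> Ls Ps L0 P0 U0 Dp.
have U'E : forall a i, hadamard U (ediv B (L *m U *m P)) a i =
   U a i * (B a i / (L *m U *m P) a i).
  by move=> a i; rewrite /hadamard /ediv !mxE.
set D := L *m U *m P.
set t := fun a i => B a i / D a i.
set U' := hadamard U _.
have Q1 : ip U' (L *m U' *m P) <= \sum_a \sum_i t a i ^+ 2 * (U a i * D a i).
  have -> : ip U' (L *m U' *m P) = \sum_a \sum_i \sum_b \sum_j
      (U a i * L a b * U b j * P j i) * (t a i * t b j).
    rewrite ipE; apply: eq_bigr => a _; apply: eq_bigr => i _.
    rewrite mxLYP mulr_sumr; apply: eq_bigr => b _.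
    rewrite mulr_sumr; apply: eq_bigr => j _.
    rewrite !U'E /t /D; ring.
  have -> : \sum_a \sum_i t a i ^+ 2 * (U a i * D a i) = \sum_a \sum_i \sum_b \sum_j
      (U a i * L a b * U b j * P j i) * t a i ^+ 2.
    apply: eq_bigr => a _; apply: eq_bigr => i _.
    rewrite /D mxLYP !mulr_sumr; apply: eq_bigr => b _.
    rewrite !mulr_sumr; apply: eq_bigr => j _; ring.
  rewrite !sum4.
  apply: (@quad2 _ (fun x y => U x.1 x.2 * L x.1 y.1 * U y.1 y.2 * P y.2 x.2)
    (fun x => t x.1 x.2)).
    move=> x y; rewrite !mulr_ge0 //.
  move=> x y.
  have -> : L y.1 x.1 = L x.1 y.1 by rewrite -{1}Ls mxE.
  have -> : P x.2 y.2 = P y.2 x.2 by rewrite -{1}Ps mxE.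
  ring.
rewrite /Gf.
have -> : ip U' B = \sum_a \sum_i U a i * t a i * B a i.
  by rewrite ipE; apply: eq_bigr => a _; apply: eq_bigr => i _; rewrite U'E.
have -> : ip U B = \sum_a \sum_i U a i * B a i by rewrite ipE.
have -> : ip U (L *m U *m P) = \sum_a \sum_i U a i * D a i by rewrite ipE.
apply: le_trans (lerD Q1 (lexx _)) _.
rewrite !mulr_sumr -!sumrN -!big_split /=.
apply: ler_sum => a _; rewrite !mulr_sumr -!sumrN -!big_split /=.
apply: ler_sum => i _.
have Dp' := Dp a i; rewrite -/D in Dp'.
have U0' := U0 a i.
rewrite /t.
have -> : (B a i / D a i) ^+ 2 * (U a i * D a i) + - (2 * (U a i * (B a i / D a i) * B a i))
   = U a i * D a i - 2 * (U a i * B a i) - U a i * ((D a i - B a i) ^+ 2 / D a i).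
  by field; rewrite gt_eqF.
rewrite lerBlDr lerDl.
by rewrite mulr_ge0 // divr_ge0 ?sqr_ge0 ?ltW.
Qed.

Lemma hadE p q (U N D : 'M[R]_(p, q)) a i :
  hadamard U (ediv N D) a i = U a i * (N a i / D a i).
Proof. by rewrite /hadamard /ediv !mxE. Qed.

Lemma nonneg_mul p q s (M : 'M[R]_(p, q)) (N : 'M[R]_(q, s)) :
  mx_nonneg M -> mx_nonneg N -> mx_nonneg (M *m N).
Proof.
move=> HM HN i j; rewrite mxE; apply: sumr_ge0 => k _; exact: mulr_ge0.
Qed.

Lemma nonneg_tr p q (M : 'M[R]_(p, q)) : mx_nonneg M -> mx_nonneg M^T.
Proof. by move=> HM i j; rewrite mxE. Qed.

Definition Qm {k m} (A : 'M[R]_(k, m)) (sigma : R) : 'M[R]_m :=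
  A^T *m A + sigma *: (ones m *m (ones m)^T).
Definition Lm {k m} (A : 'M[R]_(k, m)) (lam sigma : R) : 'M[R]_m :=
  Qm A sigma + lam%:M.

Lemma Qm_sym k m (A : 'M[R]_(k, m)) sigma : (Qm A sigma)^T = Qm A sigma.
Proof. by rewrite /Qm linearD /= linearZ /= !trmx_mul !trmxK. Qed.

Lemma Lm_sym k m (A : 'M[R]_(k, m)) lam sigma : (Lm A lam sigma)^T = Lm A lam sigma.
Proof. by rewrite /Lm linearD /= Qm_sym tr_scalar_mx. Qed.

Lemma Qm_nonneg k m (A : 'M[R]_(k, m)) sigma :
  (forall a b, negpart ((A^T *m A) a b) <= sigma) -> mx_nonneg (Qm A sigma).
Proof.
move=> H a b; rewrite /Qm !mxE big_ord1 !mxE mulr1.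
have := H a b; rewrite /negpart.
have : Num.min ((A^T *m A) a b) 0 <= (A^T *m A) a b by rewrite ge_min lexx.
move: (Num.min _ _) => z; rewrite mxE; lra.
Qed.

Lemma Lm_nonneg k m (A : 'M[R]_(k, m)) lam sigma :
  0 <= lam ->
  (forall a b, negpart ((A^T *m A) a b) <= sigma) -> mx_nonneg (Lm A lam sigma).
Proof.
move=> l0 H a b; rewrite /Lm mxE; apply: addr_ge0; first exact: Qm_nonneg.
by rewrite mxE mulrn_wge0.
Qed.

Lemma objE k m n r (A : 'M[R]_(k, m)) (X : 'M[R]_(m, n)) lam sigma
  (U : 'M[R]_(m, r)) (V : 'M[R]_(n, r)) :
  objective A X lam sigma U V = ip X (Qm A sigma *m X) +
   (ip (U *m V^T) (Lm A lam sigma *m (U *m V^T))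
    - 2 * ip (U *m V^T) (Qm A sigma *m X)).
Proof.
rewrite /objective !frob2E.
set W := U *m V^T; clearbody W.
rewrite (ip_mull _ _ _ A) (ip_mull _ _ _ (ones m)^T) trmxK !mulmxA.
have HQ : forall Z : 'M[R]_(m, n), Qm A sigma *m Z =
   A^T *m A *m Z + sigma *: (ones m *m (ones m)^T *m Z).
  by move=> Z; rewrite /Qm mulmxDl -scalemxAl.
have HL : forall Z : 'M[R]_(m, n), Lm A lam sigma *m Z =
   Qm A sigma *m Z + lam *: Z.
  by move=> Z; rewrite /Lm mulmxDl mul_scalar_mx.
have Hs : ip X (Qm A sigma *m W) = ip W (Qm A sigma *m X).
  by rewrite ipC ip_mull Qm_sym.
rewrite -addrA [lam * _ + _]addrC addrA.
have -> : ip (X - W) (A^T *m A *m (X - W)) +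
  sigma * ip (X - W) (ones m *m (ones m)^T *m (X - W)) =
  ip (X - W) (Qm A sigma *m (X - W)) by rewrite HQ ipDr ipZr.
rewrite mulmxBr ipDl ipNl !ipDr !ipNr Hs.
rewrite HL ipDr ipZr; ring.
Qed.

Lemma objU k m n r (A : 'M[R]_(k, m)) (X : 'M[R]_(m, n)) lam sigma
  (U : 'M[R]_(m, r)) (V : 'M[R]_(n, r)) :
  objective A X lam sigma U V = ip X (Qm A sigma *m X) +
   Gf (Lm A lam sigma) (V^T *m V) (Qm A sigma *m X *m V) U.
Proof.
by rewrite objE /Gf !ip_mulr trmxK !mulmxA.
Qed.

Lemma ip_UYt m n r (U : 'M[R]_(m, r)) (Y : 'M[R]_(n, r)) Z :
  ip (U *m Y^T) Z = ip Y (Z^T *m U).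
Proof. by rewrite ip_mull ip_trl trmx_mul trmxK. Qed.

Lemma objV k m n r (A : 'M[R]_(k, m)) (X : 'M[R]_(m, n)) lam sigma
  (U : 'M[R]_(m, r)) (V : 'M[R]_(n, r)) :
  objective A X lam sigma U V = ip X (Qm A sigma *m X) +
   Gf 1%:M (U^T *m Lm A lam sigma *m U) (X^T *m Qm A sigma *m U) V.
Proof.
rewrite objE /Gf !ip_UYt !trmx_mul Lm_sym Qm_sym trmxK mul1mx !mulmxA.
done.
Qed.

Lemma numU_eq k m n r (A : 'M[R]_(k, m)) (X : 'M[R]_(m, n)) lam sigma
  (U : 'M[R]_(m, r)) (V : 'M[R]_(n, r)) :
  numU A X lam sigma U V = Qm A sigma *m X *m V.
Proof. by rewrite /numU /Qm !mulmxDl -!scalemxAl. Qed.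

Lemma denU_eq k m n r (A : 'M[R]_(k, m)) (X : 'M[R]_(m, n)) lam sigma
  (U : 'M[R]_(m, r)) (V : 'M[R]_(n, r)) :
  denU A X lam sigma U V = Lm A lam sigma *m U *m (V^T *m V).
Proof. by rewrite /denU /Lm /Qm !mulmxDl -!scalemxAl mul_scalar_mx -scalemxAl !mulmxA. Qed.

Lemma numV_eq k m n r (A : 'M[R]_(k, m)) (X : 'M[R]_(m, n)) lam sigma
  (U : 'M[R]_(m, r)) (V : 'M[R]_(n, r)) :
  numV A X lam sigma U V = X^T *m Qm A sigma *m U.
Proof. by rewrite /numV /Qm !mulmxDr !mulmxDl -!scalemxAr -!scalemxAl !mulmxA. Qed.

Lemma denV_eq k m n r (A : 'M[R]_(k, m)) (X : 'M[R]_(m, n)) lam sigma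
  (U : 'M[R]_(m, r)) (V : 'M[R]_(n, r)) :
  denV A X lam sigma U V = 1%:M *m V *m (U^T *m Lm A lam sigma *m U).
Proof.
rewrite /denV /Lm /Qm mul1mx !(mulmxDl, mulmxDr) mul_mx_scalar -!scalemxAl -!scalemxAr -?scalemxAl -?scalemxAr !mulmxA.
done.
Qed.
End S.

Theorem mainTheorem10 (R : realFieldType) (k m n r : nat)
  (A : 'M[R]_(k, m)) (X : 'M[R]_(m, n)) (lam sigma : R)
  (U : 'M[R]_(m, r)) (V : 'M[R]_(n, r)) :
  mx_nonneg X ->
  0 <= lam <= 1 ->
  0 <= sigma ->
  (forall a b, negpart ((A^T *m A) a b) <= sigma) ->
  mx_nonneg U -> mx_nonneg V ->
  (mx_pos (denU A X lam sigma U V) ->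
     mx_nonneg (updU A X lam sigma U V) /\
     objective A X lam sigma (updU A X lam sigma U V) V
       <= objective A X lam sigma U V) /\
  (mx_pos (denV A X lam sigma U V) ->
     mx_nonneg (updV A X lam sigma U V) /\
     objective A X lam sigma U (updV A X lam sigma U V)
       <= objective A X lam sigma U V).
Proof.
move=> X0 /andP[l0 _] s0 Hneg U0 V0.
have Q0 : mx_nonneg (Qm A sigma) by apply: Qm_nonneg.
have L0 : mx_nonneg (Lm A lam sigma) by apply: Lm_nonneg.
split=> Dp.
  split.
    move=> a i; rewrite /updU hadE.
    apply: mulr_ge0 => //; apply: divr_ge0; last exact: ltW.
    by rewrite numU_eq; apply: nonneg_mul => //; apply: nonneg_mul.
  rewrite !objU lerD2l /updU numU_eq denU_eq.
  rewrite denU_eq in Dp.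
  apply: mu_step => //.
  - exact: Lm_sym.
  - by rewrite trmx_mul trmxK.
  - by apply: nonneg_mul => //; apply: nonneg_tr.
split.
  move=> a i; rewrite /updV hadE.
  apply: mulr_ge0 => //; apply: divr_ge0; last exact: ltW.
  rewrite numV_eq; apply: nonneg_mul => //; apply: nonneg_mul => //.
  exact: nonneg_tr.
rewrite !objV lerD2l /updV numV_eq denV_eq.
rewrite denV_eq in Dp.
apply: mu_step => //.
- exact: tr_scalar_mx.
- by rewrite !trmx_mul Lm_sym trmxK mulmxA.
- by move=> a b; rewrite mxE mulrn_wge0.
- by apply: nonneg_mul => //; apply: nonneg_mul => //; apply: nonneg_tr.
Qed.
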